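(* For every integer $i\geq 1$ and all positive integers $n_1,\ldots,n_{i+1}$, the complete $(i+1)$-partite graph $K=K_{n_1,\ldots,n_{i+1}}$ satisfies $\mathrm{lw}_i(K)\geq \min_{1\le j\le i+1} n_j+1$ and $\mathrm{lw}_{i+1}(K)=i+1$.
   Context: All graphs are finite, simple and undirected. For vertices $u,v$ of a connected graph, the interval $I(u,v)$ is the set of vertices lying on some shortest $(u,v)$-path. A set $S$ of vertices is (geodesically) convex if $I(u,v)\subseteq S$ for all $u,v\in S$. A graph $M$ is median if it is connected and for any three vertices $u,v,w$ we have $|I(u,v)\cap I(v,w)\cap I(w,u)|=1$. A median decomposition of a graph $G$ is a pair $(M,\mathcal{X})$ where $M$ is a median graph and $\mathcal{X}=(X_a)_{a\in V(M)}$ is a family of subsets of $V(G)$ (bags) such that (M1) for every edge $uv\in E(G)$ there is $a\in V(M)$ with $u,v\in X_a$, and (M2) for every $v\in V(G)$ the set $\{a\in V(M): v\in X_a\}$ is non-empty and convex in $M$. Its width is $\max_{a\in V(M)}|X_a|$. A $k$-lattice is a Cartesian product of $k$ (finite) paths. The lattice dimension of a graph $M$ is the least $k$ such that $M$ admits an isometric (distance-preserving) embedding into a $k$-lattice. For $i\geq1$, an $i$-lattice decomposition of $G$ is a median decomposition $(M,\mathcal{X})$ of $G$ with $M$ of lattice dimension at most $i$, and the $i$-latticewidth $\mathrm{lw}_i(G)$ is the minimum width of an $i$-lattice decomposition of $G$. *)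

(* Defs.v *)
From HB Require Import structures.
From mathcomp Require Import all_boot all_order.
Set Implicit Arguments. Unset Strict Implicit. Unset Printing Implicit Defensive.

Definition simple_graph (T : finType) (e : rel T) : Prop :=
  symmetric e /\ irreflexive e.

Definition connected (T : finType) (e : rel T) : Prop :=
  forall x y : T, connect e x y.

Fixpoint ball (T : finType) (e : rel T) (d : nat) (x : T) : {set T} :=
  match d with
  | 0 => [set x]
  | d'.+1 => ball e d' x :|: [set y | [exists z in ball e d' x, e z y]]
  end.

(* Shortest-path distance (equals #|T| when y is unreachable from x). *)
Definition dist (T : finType) (e : rel T) (x y : T) : nat :=
  find (fun d => y \in ball e d x) (iota 0 #|T|).

Definition interval (T : finType) (e : rel T) (u v : T) : {set T} :=
  [set w | dist e u w + dist e w v == dist e u v].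

Definition convex (T : finType) (e : rel T) (S : {set T}) : Prop :=
  forall u v, u \in S -> v \in S -> interval e u v \subset S.

Definition median_graph (T : finType) (e : rel T) : Prop :=
  simple_graph e /\ connected e /\
  forall u v w : T,
    #|interval e u v :&: interval e v w :&: interval e w u| = 1.

Definition median_decomposition (V : finType) (eG : rel V)
    (M : finType) (eM : rel M) (X : M -> {set V}) : Prop :=
  median_graph eM /\
  (forall u v : V, eG u v -> exists a : M, u \in X a /\ v \in X a) /\
  (forall v : V, (exists a : M, v \in X a) /\ convex eM [set a | v \in X a]).

Definition width (V M : finType) (X : M -> {set V}) : nat :=
  \max_(a : M) #|X a|.

(* The k-lattice P_{m 0} x ... x P_{m (k-1)}: Cartesian product of paths,
   where the path P_m has vertex set 'I_m and edges between consecutive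
   integers. *)
Definition lattice_vertex (k : nat) (m : 'I_k -> nat) : finType :=
  {dffun forall j : 'I_k, 'I_(m j)}.

Definition path_adj (n : nat) (a b : 'I_n) : bool :=
  ((val a).+1 == val b) || ((val b).+1 == val a).

Definition lattice_adj (k : nat) (m : 'I_k -> nat) : rel (lattice_vertex m) :=
  fun f g => [exists j, path_adj (f j) (g j) &&
                        [forall j', (j' != j) ==> (val (f j') == val (g j'))]].

Definition lattice_dim_le (M : finType) (eM : rel M) (k : nat) : Prop :=
  exists k', k' <= k /\
  exists (m : 'I_k' -> nat) (phi : M -> lattice_vertex m),
    forall x y : M, dist (@lattice_adj k' m) (phi x) (phi y) = dist eM x y.

Definition lattice_decomposition (i : nat) (V : finType) (eG : rel V)
    (M : finType) (eM : rel M) (X : M -> {set V}) : Prop :=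
  median_decomposition eG eM X /\ lattice_dim_le eM i.

Definition lw_ge (i : nat) (V : finType) (eG : rel V) (w : nat) : Prop :=
  forall (M : finType) (eM : rel M) (X : M -> {set V}),
    lattice_decomposition i eG eM X -> w <= width X.

Definition lw_eq (i : nat) (V : finType) (eG : rel V) (w : nat) : Prop :=
  lw_ge i eG w /\
  exists (M : finType) (eM : rel M) (X : M -> {set V}),
    lattice_decomposition i eG eM X /\ width X = w.

Definition Kvert (p : nat) (n : 'I_p -> nat) : finType :=
  {j : 'I_p & 'I_(n j)}.

Definition Kadj (p : nat) (n : 'I_p -> nat) : rel (Kvert n) :=
  fun u v => tag u != tag v.

(* Main.v *)
Require Import Defs.
From mathcomp Require Import all_boot all_order.
From mathcomp Require Import zify.
Set Implicit Arguments. Unset Strict Implicit. Unset Printing Implicit Defensive.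

Definition ad (a b : nat) := (a - b) + (b - a).

Lemma ad_betw x y z : (x <= y <= z) || (z <= y <= x) -> ad x y + ad y z = ad x z.
Proof. rewrite /ad; case/orP => /andP [h1 h2]; lia. Qed.

Lemma betw_ad x y z : ad x y + ad y z = ad x z -> (x <= y <= z) || (z <= y <= x).
Proof. rewrite /ad => H; apply/orP; case: (leqP x z) => h; [left|right]; apply/andP; lia. Qed.

Lemma ad_tri x y z : ad x z <= ad x y + ad y z.
Proof. rewrite /ad; lia. Qed.

Lemma ad_step x y S : x != y ->
  ad x (if x < y then y.-1 else y.+1) + S = (ad x y + S).-1.
Proof. rewrite /ad; case: (ltnP x y); lia. Qed.

Lemma adj_step x y : x != y ->
  ((if x < y then y.-1 else y.+1).+1 == y) || (y.+1 == (if x < y then y.-1 else y.+1)).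
Proof. case: (ltnP x y) => h h2; apply/orP; [left|right]; apply/eqP; lia. Qed.

Lemma sum_eq_ge (I : finType) (F G : I -> nat) :
  (forall j, G j <= F j) -> \sum_j F j = \sum_j G j -> forall j, F j = G j.
Proof.
move=> H E j; apply/eqP; rewrite eqn_leq H andbT.
move: E; rewrite (bigD1 j) //= (bigD1 j (F:=G)) //=.
have : \sum_(i | i != j) G i <= \sum_(i | i != j) F i by apply: leq_sum.
lia.
Qed.

Lemma prod_bound (I : Type) (s : seq I) (F : I -> nat) :
  (forall i, 0 < F i) -> \sum_(i <- s) (F i).-1 < foldr muln 1 (map F s).
Proof.
move=> H; elim: s => [|a s IH]; first by rewrite big_nil.
rewrite big_cons /=. have := H a. nia.
Qed.

Section Lat.
Variables (k : nat) (m : 'I_k -> nat).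
Local Notation L := (lattice_vertex m).
Local Notation e := (@lattice_adj k m).
Definition l1 (f g : L) := \sum_(j < k) ad (f j) (g j).

Lemma ffeq (f g : L) : (forall j, (f j : nat) = (g j : nat)) -> f = g.
Proof. move=> H; apply/ffunP => j; apply: val_inj; exact: H. Qed.

Lemma l1_0 (f g : L) : l1 f g = 0 -> f = g.
Proof.
move=> H; apply: ffeq => j.
have : ad (f j) (g j) <= l1 f g by rewrite /l1 (bigD1 j) //=; apply: leq_addr.
rewrite H /ad; lia.
Qed.

Lemma l1_ff (f : L) : l1 f f = 0.
Proof. by rewrite /l1 big1 // => j _; rewrite /ad subnn. Qed.

Lemma l1_tri (f g h : L) : l1 f h <= l1 f g + l1 g h.
Proof.
rewrite /l1 -big_split /=; apply: leq_sum => j _; rewrite /ad; lia.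
Qed.

Lemma l1_sym (f g : L) : l1 f g = l1 g f.
Proof. by apply: eq_bigr => j _; rewrite /ad addnC. Qed.

Lemma adj_l1 (f g : L) : e f g -> l1 f g = 1.
Proof.
move=> /existsP [j /andP [Hp /forallP Ho]].
rewrite /l1 (bigD1 j) //= big1 ?addn0.
  by move: Hp; rewrite /path_adj /ad /=; case/orP => /eqP; lia.
move=> j' Hj'; have := Ho j'; rewrite Hj' /= => /eqP; rewrite /ad; lia.
Qed.

Lemma l1_between (a b c : L) : l1 a b + l1 b c = l1 a c ->
  forall j, ((a j : nat) <= b j <= c j) || ((c j : nat) <= b j <= a j).
Proof.
move=> H j.
have Hj := @sum_eq_ge _ (fun j => ad (a j) (b j) + ad (b j) (c j))
   (fun j => ad (a j) (c j)) (fun j' => ad_tri _ _ _)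
   (ltac:(by rewrite big_split)) j.
exact: betw_ad.
Qed.

Lemma between_l1 (a b c : L) :
  (forall j, ((a j : nat) <= b j <= c j) || ((c j : nat) <= b j <= a j)) ->
  l1 a b + l1 b c = l1 a c.
Proof.
move=> H; rewrite /l1 -big_split; apply: eq_bigr => j _ /=.
exact: ad_betw.
Qed.

Lemma step (f g : L) : 0 < l1 f g -> exists z : L, l1 f z = (l1 f g).-1 /\ e z g.
Proof.
move=> Hpos.
have [j Hj] : exists j, (f j : nat) != (g j : nat).
  apply/existsP; apply: contraLR Hpos; rewrite negb_exists => /forallP Hall.
  rewrite -leqNgt leqn0; apply/eqP/big1 => j _; have := Hall j.
  by rewrite negbK /ad => /eqP ->; rewrite subnn.
pose v (j' : 'I_k) := if j' == j then
   (if (f j : nat) < (g j : nat) then ((g j : nat)).-1 else ((g j : nat)).+1) else (g j' : nat).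
have Hv : forall j', v j' < m j'.
  move=> j'; rewrite /v; case: eqP => [->|_]; last exact: ltn_ord.
  have := ltn_ord (f j); have := ltn_ord (g j); move: Hj.
  case: (ltnP (f j) (g j)); lia.
pose z : L := [ffun j' => Ordinal (Hv j')].
exists z; split.
- rewrite /l1 (bigD1 j) //= [in RHS](bigD1 j) //=.
  rewrite (eq_bigr (fun j' => ad (f j') (g j'))); last first.
    by move=> j' Hj'; rewrite ffunE /= /v (negbTE Hj').
  rewrite ffunE /= /v eqxx; exact: ad_step.
- apply/existsP; exists j; apply/andP; split.
    rewrite ffunE /path_adj /= /v eqxx; exact: adj_step.
  by apply/forallP => j'; apply/implyP => Hj'; rewrite ffunE /= /v (negbTE Hj').
Qed.

Lemma ball_l1 d (f : L) : ball e d f = [set g | l1 f g <= d].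
Proof.
elim: d => [|d IH] /=.
  apply/setP => g; rewrite !inE leqn0; apply/eqP/eqP.
    by move=> ->; rewrite l1_ff.
  by move/l1_0 => ->.
apply/setP => g; rewrite !inE IH inE; apply/idP/idP.
  case/orP => [H|/existsP [z /andP [Hz Hzg]]]; first by rewrite ltnW.
  move: Hz; rewrite ?inE => Hz; have := l1_tri f z g; rewrite (adj_l1 Hzg); lia.
move=> H; case: (leqP (l1 f g) d) => [H1|Hlt]; first by apply/orP; left.
apply/orP; right; have [z [Hz Hzg]] := step (leq_ltn_trans (leq0n d) Hlt).
apply/existsP; exists z; rewrite Hzg inE Hz andbT; lia.
Qed.

Lemma l1_bound (f g : L) : l1 f g < #|L|.
Proof.
rewrite /L card_dep_ffun.
have Hp : forall j, 0 < #|'I_(m j)| by move=> j; rewrite card_ord; apply: (leq_ltn_trans _ (ltn_ord (f j))).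
apply: (leq_ltn_trans _ (prod_bound (enum 'I_k) Hp)).
rewrite big_enum /=; apply: leq_sum => j _; rewrite card_ord /ad.
have := ltn_ord (f j); have := ltn_ord (g j); lia.
Qed.

Lemma find_ge a N : a < N -> find (fun d => a <= d) (iota 0 N) = a.
Proof.
move=> H; rewrite -(subnKC (ltnW H)) iotaD find_cat.
have -> : has (fun d => a <= d) (iota 0 a) = false.
  apply/negbTE/hasPn => x; rewrite mem_iota; lia.
rewrite size_iota add0n.
case E: (N - a) => [|n]; first lia.
by rewrite /= ifT ?addn0.
Qed.

Lemma dist_l1 (f g : L) : dist e f g = l1 f g.
Proof.
rewrite /dist -[RHS](find_ge (l1_bound f g)); apply: eq_find => d.
by rewrite ball_l1 inE.
Qed.

End Lat.


Section Gen.
Variables (T : finType) (e : rel T).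

Lemma dist0 x y : dist e x y = 0 -> x = y.
Proof.
rewrite /dist => H.
have Hn : 0 < #|T| by apply/card_gt0P; exists x.
have Hh : has (fun d => y \in ball e d x) (iota 0 #|T|) by rewrite has_find size_iota H.
have := nth_find 0 Hh; rewrite H nth_iota // add0n /= inE => /eqP ->.
by [].
Qed.

Lemma ball_connect d x y : y \in ball e d x -> connect e x y.
Proof.
elim: d y => [|d IH] y /=; first by rewrite inE => /eqP ->; exact: connect0.
rewrite inE => /orP [/IH //|]; rewrite inE => /existsP [z /andP [Hz Hzy]].
apply: connect_trans (IH _ Hz) _; exact: connect1.
Qed.

Hypothesis Hmed : median_graph e.

Lemma median_ex u v w : exists m, [/\ m \in interval e u v, m \in interval e v w & m \in interval e w u].
Proof.
case: Hmed => _ [_ H]; have := H u v w => Hc.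
have : 0 < #|interval e u v :&: interval e v w :&: interval e w u| by rewrite Hc.
by case/card_gt0P => x; rewrite !inE => /andP [/andP [h1 h2] h3]; exists x; rewrite !inE.
Qed.

Lemma convexI (A B : {set T}) : convex e A -> convex e B -> convex e (A :&: B).
Proof.
move=> hA hB u v; rewrite !inE => /andP [uA uB] /andP [vA vB].
by rewrite subsetI hA ?hB.
Qed.

Lemma helly3 (A B C : {set T}) : convex e A -> convex e B -> convex e C ->
  A :&: B != set0 -> B :&: C != set0 -> C :&: A != set0 -> A :&: B :&: C != set0.
Proof.
move=> hA hB hC /set0Pn [p] /setIP [pA pB] /set0Pn [q] /setIP [qB qC] /set0Pn [r] /setIP [rC rA].
have [x [h1 h2 h3]] := median_ex p q r.
apply/set0Pn; exists x; rewrite !inE.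
rewrite (subsetP (hA _ _ rA pA) _ h3) (subsetP (hB _ _ pB qB) _ h1) (subsetP (hC _ _ qC rC) _ h2).
done.
Qed.

Lemma helly_n n : forall (F : seq {set T}), size F = n.+1 -> (forall A, A \in F -> convex e A) ->
  (forall A B, A \in F -> B \in F -> A :&: B != set0) ->
  exists x, forall A, A \in F -> x \in A.
Proof.
elim: n => [|n IH] [|A F] //= [Hs] hc hp.
  have /set0Pn [x] := hp A A (mem_head _ _) (mem_head _ _); rewrite setIid => xA.
  by move/size0nil: Hs => ->; exists x => B; rewrite inE => /eqP ->.
have [x Hx] : exists x, forall B, B \in [seq A :&: B | B <- F] -> x \in B.
  apply: (IH _ (etrans (size_map _ _) Hs)).
  - move=> B /mapP [C CF ->]; apply: convexI; apply: hc; by rewrite inE ?eqxx ?CF ?orbT.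
  - move=> B1 B2 /mapP [C1 C1F ->] /mapP [C2 C2F ->].
    have hA : A \in A :: F by rewrite mem_head.
    have h1 : C1 \in A :: F by rewrite inE C1F orbT.
    have h2 : C2 \in A :: F by rewrite inE C2F orbT.
    have := helly3 (hc _ hA) (hc _ h1) (hc _ h2) (hp _ _ hA h1) (hp _ _ h1 h2) (hp _ _ h2 hA).
    apply: contra_neq => H; apply/setP => y; rewrite !inE.
    have := congr1 (fun S : {set T} => y \in S) H; rewrite !inE /=.
    by case: (y \in A); case: (y \in C1); case: (y \in C2).
exists x => B; rewrite inE => /orP [/eqP ->|BF].
  by case: F Hs {IH hc hp} Hx => [//|C F] _ Hx; have := Hx (A :&: C) (mem_head _ _); rewrite inE => /andP [].
by have := Hx (A :&: B) (map_f _ BF); rewrite inE => /andP [].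
Qed.

Lemma helly (F : seq {set T}) : (forall A, A \in F -> convex e A) ->
  (forall A B, A \in F -> B \in F -> A :&: B != set0) ->
  F != [::] -> exists x, forall A, A \in F -> x \in A.
Proof. by case: F => [//|A F] hc hp _; apply: (@helly_n (size F)). Qed.

End Gen.


Definition medn x y z := maxn (minn x y) (minn (maxn x y) z).

Definition betw (a b c : nat) := (a <= b <= c) || (c <= b <= a).

Lemma medn_lt x y z N : x < N -> y < N -> z < N -> medn x y z < N.
Proof. rewrite /medn; lia. Qed.

Lemma medn_betw x y z : [&& betw x (medn x y z) y, betw y (medn x y z) z & betw z (medn x y z) x].
Proof. rewrite /betw /medn; apply/and3P; split; apply/orP; case: (leqP x y); case: (leqP y z); case: (leqP x z); lia. Qed.

Lemma betw_medn x y z b : betw x b y -> betw y b z -> betw z b x -> b = medn x y z.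
Proof. rewrite /betw /medn => /orP [/andP [h1 h2]|/andP [h1 h2]] /orP [/andP [h3 h4]|/andP [h3 h4]] /orP [/andP [h5 h6]|/andP [h5 h6]]; lia. Qed.

Section LM.
Variables (k : nat) (m : 'I_k -> nat).
Local Notation L := (lattice_vertex m).
Local Notation e := (@lattice_adj k m).

Lemma interval_L (a b c : L) : (b \in interval e a c) = [forall j, betw (a j) (b j) (c j)].
Proof.
rewrite inE !dist_l1; apply/eqP/forallP.
  by move=> H j; apply: (l1_between H).
by move=> H; apply: between_l1 => j; exact: H.
Qed.

Lemma lattice_median : median_graph e.
Proof.
split; [split|split].
- move=> f g; apply/existsP/existsP => [] [j /andP [h1 /forallP h2]]; exists j; apply/andP; split.
  + by move: h1; rewrite /path_adj orbC.
  + by apply/forallP => j'; apply/implyP => /(implyP (h2 j')) /eqP ->.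
  + by move: h1; rewrite /path_adj orbC.
  + by apply/forallP => j'; apply/implyP => /(implyP (h2 j')) /eqP ->.
- move=> f; apply/negbTE/existsPn => j; rewrite /path_adj.
  apply/negP => /andP [/orP [] /eqP H _]; lia.
- move=> f g; apply: (@ball_connect _ _ (l1 f g)); rewrite ball_l1 inE //.
move=> u v w.
have Hv : forall j, medn (u j) (v j) (w j) < m j.
  by move=> j; apply: medn_lt; apply: ltn_ord.
pose z : L := [ffun j => Ordinal (Hv j)].
apply/eqP/cards1P; exists z; apply/setP => x; rewrite !in_setI !interval_L in_set1.
apply/idP/eqP.
  move=> /andP [/andP [/forallP h1 /forallP h2] /forallP h3].
  apply: ffeq => j; rewrite ffunE /=; exact: betw_medn.
move=> ->; apply/andP; split; [apply/andP; split|]; apply/forallP => j; rewrite ffunE /=;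
  by case/and3P: (medn_betw (u j) (v j) (w j)).
Qed.

End LM.


Lemma sep_nat1 yc xc sc tc : betw yc xc sc -> betw tc yc xc -> xc < yc -> sc < tc.
Proof. rewrite /betw => /orP [/andP [h1 h2]|/andP [h1 h2]] /orP [/andP [h3 h4]|/andP [h3 h4]]; lia. Qed.
Lemma sep_nat2 yc xc sc tc : betw yc xc sc -> betw tc yc xc -> yc < xc -> tc < sc.
Proof. rewrite /betw => /orP [/andP [h1 h2]|/andP [h1 h2]] /orP [/andP [h3 h4]|/andP [h3 h4]]; lia. Qed.

Section Sep.
Variables (M : finType) (eM : rel M) (k : nat) (m : 'I_k -> nat)
  (phi : M -> lattice_vertex m).
Hypothesis Hmed : median_graph eM.
Hypothesis Hiso : forall x y, dist (@lattice_adj k m) (phi x) (phi y) = dist eM x y.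

Lemma iso_interval a b c : a \in interval eM b c -> forall j, betw (phi b j) (phi a j) (phi c j).
Proof.
move=> H; have : phi a \in interval (@lattice_adj k m) (phi b) (phi c).
  by move: H; rewrite !inE !Hiso.
by rewrite interval_L => /forallP.
Qed.

Definition sepc (A B : {set M}) c :=
  forall s t, s \in A -> t \in B -> (phi s c : nat) < phi t c.

Lemma separate (A B : {set M}) : convex eM A -> convex eM B ->
  A != set0 -> B != set0 -> A :&: B = set0 ->
  exists c, sepc A B c \/ sepc B A c.
Proof.
move=> cA cB /set0Pn [x0 x0A] /set0Pn [y0 y0B] AB.
pose P : pred (M * M) := fun q => (q.1 \in A) && (q.2 \in B).
have P0 : P (x0, y0) by rewrite /P /= x0A y0B.
case: (@arg_minnP _ (x0, y0) P (fun q : M * M => dist eM q.1 q.2) P0) => [[x y]] /= /andP [xA yB] Hmin.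
have C1 : forall s, s \in A -> x \in interval eM y s.
  move=> s sA; have [z [h1 h2 h3]] := median_ex Hmed s x y.
  have zA : z \in A := subsetP (cA _ _ sA xA) _ h1.
  have := Hmin (z, y); rewrite /P /= zA yB => /(_ isT) Hm.
  move: h2; rewrite inE => /eqP h2.
  have /dist0 Exz : dist eM x z = 0 by lia.
  by rewrite Exz.
have C2 : forall t, t \in B -> y \in interval eM t x.
  move=> t tB; have [z [h1 h2 h3]] := median_ex Hmed x y t.
  have zB : z \in B := subsetP (cB _ _ yB tB) _ h2.
  have := Hmin (x, z); rewrite /P /= zB xA => /(_ isT) Hm.
  move: h1; rewrite inE => /eqP h1.
  have /dist0 Ezy : dist eM z y = 0 by lia.
  by rewrite -Ezy.
have [c Hc] : exists c, (phi x c : nat) != phi y c.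
  apply/existsP; apply: contraT; rewrite negb_exists => /forallP Hall.
  have Exy : phi x = phi y by apply: ffeq => j; have := Hall j; rewrite negbK => /eqP.
  have : dist eM x y = 0 by rewrite -Hiso Exy dist_l1 l1_ff.
  move/dist0 => Exy'.
  have : y \in A :&: B by rewrite inE yB -Exy' xA.
  by rewrite AB inE.
exists c; case: (ltngtP (phi x c) (phi y c)) => [lt|gt|eq]; last by rewrite eq eqxx in Hc.
- left => s t sA tB; apply: (sep_nat1 _ _ lt).
    exact: (iso_interval (C1 _ sA)).
  exact: (iso_interval (C2 _ tB)).
- right => t s tB sA; apply: (sep_nat2 _ _ gt).
    exact: (iso_interval (C1 _ sA)).
  exact: (iso_interval (C2 _ tB)).
Qed.

End Sep.


Lemma bigmin_le_seq (I : eqType) (r : seq I) (F : I -> nat) x0 j :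
  j \in r -> \big[minn/x0]_(i <- r) F i <= F j.
Proof.
elim: r => [//|a r IH]; rewrite inE big_cons => /orP [/eqP ->|/IH]; first exact: geq_minl.
move=> H; apply: leq_trans H; exact: geq_minr.
Qed.

Lemma bigmin_le (I : finType) (F : I -> nat) x0 j : \big[minn/x0]_i F i <= F j.
Proof. exact: bigmin_le_seq (mem_index_enum j). Qed.

Section Dec.
Variables (V M : finType) (eG : rel V) (eM : rel M) (X : M -> {set V}).
Hypothesis Hdec : median_decomposition eG eM X.

Lemma common u v : eG u v \/ u = v -> exists a, u \in X a /\ v \in X a.
Proof.
case: Hdec => _ [H1 H2] [/H1 //|<-].
by case: (H2 u) => [[a ha] _]; exists a.
Qed.

Lemma bag_of (S : {set V}) :
  (forall u v, u \in S -> v \in S -> exists a, u \in X a /\ v \in X a) ->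
  S != set0 -> exists a, S \subset X a.
Proof.
move=> Hp /set0Pn [v0 v0S].
have Hmed := Hdec.1.
pose F := [seq [set a | v \in X a] | v <- enum S].
have [x Hx] : exists x, forall A, A \in F -> x \in A.
  apply: (helly Hmed).
  - by move=> A /mapP [v _ ->]; case: Hdec => _ [_ H2]; case: (H2 v).
  - move=> A B /mapP [u uS ->] /mapP [v vS ->].
    rewrite !mem_enum in uS vS; have [a [ha hb]] := Hp _ _ uS vS.
    by apply/set0Pn; exists a; rewrite !inE ha hb.
  - apply/eqP => /(congr1 size); rewrite size_map -cardE.
    by move/eqP; rewrite cards_eq0 => /eqP S0; rewrite S0 inE in v0S.
exists x; apply/subsetP => v vS; have := Hx [set a | v \in X a]; rewrite inE; apply.
by apply: map_f; rewrite mem_enum.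
Qed.

Lemma width_ge a : #|X a| <= width X.
Proof. exact: (leq_bigmax (F := fun a => #|X a|)). Qed.

End Dec.


Section K.
Variables (p : nat) (n : 'I_p -> nat).
Hypothesis Hn : forall j, 0 < n j.
Hypothesis Hp : 0 < p.
Local Notation KV := (Kvert n).
Local Notation eK := (@Kadj p n).

Definition tg (j : 'I_p) (x : 'I_(n j)) : KV := Tagged (fun j => 'I_(n j)) x.

Lemma part_card j : #|[set v : KV | tag v == j]| = n j.
Proof.
have -> : [set v : KV | tag v == j] = [set tg x | x : 'I_(n j)].
  apply/setP => v; rewrite inE; apply/eqP/imsetP.
    by case: v => j' x /= Ej; subst j'; exists x.
  by case=> x _ ->.
rewrite card_imset ?cardsT ?card_ord //.
by move=> x y H; exact: eq_from_Tagged H.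
Qed.

Definition rep (j : 'I_p) : KV := tg (Ordinal (Hn j)).

Lemma clique_card : #|[set rep j | j : 'I_p]| = p.
Proof.
rewrite card_imset ?cardsT ?card_ord //.
by move=> j j' /(congr1 tag).
Qed.

Lemma lower_clique : lw_ge p eK p.
Proof.
move=> M eM X [Hdec _].
have [a Ha] : exists a, [set rep j | j : 'I_p] \subset X a.
  apply: (bag_of Hdec).
    move=> u v /imsetP [j _ ->] /imsetP [j' _ ->]; apply: (common Hdec).
    case: (eqVneq j j') => [->|ne]; [by right|left].
    by rewrite /Kadj /=.
  by apply/set0Pn; exists (rep (Ordinal Hp)); apply: imset_f.
apply: leq_trans (width_ge X a); apply: leq_trans (subset_leq_card Ha); by rewrite clique_card.
Qed.

Definition Xb (f : lattice_vertex n) : {set KV} := [set v | tagged v == f (tag v)].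

Definition vf (u v : KV) (j : 'I_p) : nat :=
  if j == tag u then (tagged u : nat) else if j == tag v then (tagged v : nat) else 0.

Lemma vf_lt u v j : vf u v j < n j.
Proof.
rewrite /vf; case: eqP => [Ej|_]; first by rewrite Ej; exact: ltn_ord.
case: eqP => [Ej|_]; first by rewrite Ej; exact: ltn_ord.
exact: Hn.
Qed.

Definition mk u v : lattice_vertex n := [ffun j => Ordinal (vf_lt u v j)].

Lemma mk_u u v : u \in Xb (mk u v).
Proof. by rewrite inE; apply/eqP/val_inj; rewrite ffunE /= /vf eqxx. Qed.

Lemma mk_v u v : tag u != tag v -> v \in Xb (mk u v).
Proof.
move=> ne; rewrite inE; apply/eqP/val_inj; rewrite ffunE /= /vf eq_sym (negbTE ne) eqxx //.
Qed.

Lemma betw_same x y : betw x y x -> y = x.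
Proof. rewrite /betw => /orP [/andP [h1 h2]|/andP [h1 h2]]; lia. Qed.

Lemma Xb_convex v : convex (@lattice_adj p n) [set a | v \in Xb a].
Proof.
move=> f g; rewrite !inE => /eqP Hf /eqP Hg; apply/subsetP => h.
rewrite interval_L => /forallP /(_ (tag v)); rewrite inE inE.
rewrite -Hf -Hg => /betw_same Hh; apply/eqP/val_inj; symmetry; exact: Hh.
Qed.

Lemma Xb_card f : #|Xb f| = p.
Proof.
have -> : Xb f = [set tg (f j) | j : 'I_p].
  apply/setP => v; rewrite inE; apply/eqP/imsetP.
    by case: v => j x /= ->; exists j.
  by case=> j _ ->.
rewrite card_imset ?cardsT ?card_ord //.
by move=> j j' /(congr1 tag).
Qed.

Lemma upper : exists (M : finType) (eM : rel M) (X : M -> {set KV}),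
    lattice_decomposition p eK eM X /\ width X = p.
Proof.
exists (lattice_vertex n), (@lattice_adj p n), Xb; split; last first.
  apply/eqP; rewrite eqn_leq; apply/andP; split.
    by apply/bigmax_leqP => f _; rewrite Xb_card.
  by apply: leq_trans (width_ge Xb (mk (rep (Ordinal Hp)) (rep (Ordinal Hp)))); rewrite Xb_card.
split; last by exists p; split => //; exists n, id.
split; first exact: lattice_median.
split.
  move=> u v ne; exists (mk u v); split; [exact: mk_u | exact: mk_v].
move=> v; split; last exact: Xb_convex.
by exists (mk v v); exact: mk_u.
Qed.

Lemma cross (M : finType) (k : nat) (m : 'I_k -> nat) (phi : M -> lattice_vertex m)
   (A B C D : {set M}) c ac ad bc bd :
  sepc phi A B c -> sepc phi C D c \/ sepc phi D C c ->
  ac \in A -> ac \in C -> ad \in A -> ad \in D ->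
  bc \in B -> bc \in C -> bd \in B -> bd \in D -> False.
Proof.
move=> hAB [hCD|hDC] acA acC adA adD bcB bcC bdB bdD.
  have := hAB _ _ adA bcB; have := hCD _ _ bcC adD; lia.
have := hAB _ _ acA bdB; have := hDC _ _ bdD acC; lia.
Qed.

Lemma part1 (q : nat) : q < p -> 1 < p ->
  forall (M : finType) (eM : rel M) (X : M -> {set KV}),
  lattice_decomposition q eK eM X -> exists j, n j + 1 <= width X.
Proof.
move=> Hqp H1p M eM X [Hdec [k' [Hk' [m [phi Hiso]]]]].
have Hmed := Hdec.1.
pose T v := [set a | v \in X a].
have Tconv : forall v, convex eM (T v) by move=> v; case: Hdec => _ [_ H2]; case: (H2 v).
have Tne : forall v, T v != set0.
  move=> v; case: Hdec => _ [_ H2]; case: (H2 v) => [[a ha] _].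
  by apply/set0Pn; exists a; rewrite inE.
case: (boolP [exists j, [forall v, forall w, ((tag v == j) && (tag w == j)) ==>
                 [exists a, (v \in X a) && (w \in X a)]]]).
  move=> /existsP [j /forallP Hj]; exists j.
  have [j' Hj'] : exists j' : 'I_p, j' != j.
    case: (eqVneq (Ordinal (ltnW H1p)) j) => [E|ne]; last by exists (Ordinal (ltnW H1p)).
    exists (Ordinal H1p); apply/eqP => E'; move: E; rewrite -E' => /(congr1 val) //.
  pose u := rep j'.
  pose S := u |: [set v : KV | tag v == j].
  have [a Ha] : exists a, S \subset X a.
    apply: (bag_of Hdec); last by apply/set0Pn; exists u; rewrite !inE eqxx.
    move=> v w; rewrite !inE => /orP [/eqP ->|vj] /orP [/eqP ->|wj].
    - by apply: (common Hdec); right.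
    - by apply: (common Hdec); left; rewrite /Kadj (eqP wj).
    - have [b [h1 h2]] : exists b, u \in X b /\ v \in X b.
        by apply: (common Hdec); left; rewrite /Kadj (eqP vj).
      by exists b.
    - have := Hj v => /forallP /(_ w); rewrite vj wj /= => /existsP [b /andP [h1 h2]].
      by exists b.
  apply: leq_trans (width_ge X a); apply: leq_trans (subset_leq_card Ha).
  rewrite cardsU1 part_card inE /= addnC.
  by rewrite (negbTE Hj').
rewrite negb_exists => /forallP Hno.
have Hsep : forall j, exists c : 'I_k', exists v w, [/\ tag v = j, tag w = j &
     sepc phi (T v) (T w) c \/ sepc phi (T w) (T v) c].
  move=> j; have := Hno j; rewrite negb_forall => /existsP [v].
  rewrite negb_forall => /existsP [w]; rewrite negb_imply => /andP [/andP [/eqP vj /eqP wj] Hn0].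
  have Hdis : T v :&: T w = set0.
    apply/setP => a; rewrite !inE; apply/negbTE; apply: contra Hn0 => H.
    by apply/existsP; exists a.
  have [c Hc] := separate Hmed Hiso (Tconv v) (Tconv w) (Tne v) (Tne w) Hdis.
  by exists c, v, w.
have [cf Hcf] := fin_all_exists Hsep.
have : [exists j1, exists j2, (j1 != j2) && (cf j1 == cf j2)].
  apply: contraT; rewrite negb_exists => /forallP H.
  have inj : injective cf.
    move=> a b E; apply/eqP; apply: contraT => ne.
    have := H a; rewrite negb_exists => /forallP /(_ b); by rewrite ne E eqxx.
  have := @leq_card _ _ cf inj; rewrite !card_ord; lia.
move=> /existsP [j1 /existsP [j2 /andP [ne /eqP Ec]]].
have [v1 [w1 [tv1 tw1 S1]]] := Hcf j1.
have [v2 [w2 [tv2 tw2 S2]]] := Hcf j2.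
rewrite -Ec in S2.
have meet : forall x y, tag x = j1 -> tag y = j2 -> exists a, a \in T x /\ a \in T y.
  move=> x y tx ty.
  have Hxy : eK x y by rewrite /Kadj tx ty.
  have [a [h1 h2]] := common Hdec (or_introl Hxy).
  by exists a; rewrite !inE h1 h2.
have [a11 [h11 h11']] := meet v1 v2 tv1 tv2.
have [a12 [h12 h12']] := meet v1 w2 tv1 tw2.
have [a21 [h21 h21']] := meet w1 v2 tw1 tv2.
have [a22 [h22 h22']] := meet w1 w2 tw1 tw2.
exfalso; case: S1 => S1.
  exact: (cross S1 S2 h11 h11' h12 h12' h21 h21' h22 h22').
exact: (cross S1 S2 h21 h21' h22 h22' h11 h11' h12 h12').
Qed.

End K.


Theorem mainTheorem2 (i : nat) (n : 'I_i.+1 -> nat) :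
  1 <= i -> (forall j, 0 < n j) ->
  lw_ge i (@Kadj i.+1 n) ((\big[minn/n ord0]_(j < i.+1) n j) + 1) /\
  lw_eq i.+1 (@Kadj i.+1 n) i.+1.
Proof.
move=> Hi Hn; have Hp : 0 < i.+1 by [].
split.
  move=> M eM X Hd.
  have H1 : 1 < i.+1 by rewrite ltnS.
  have [j Hj] := part1 Hn Hp (ltnSn i) H1 Hd.
  apply: leq_trans Hj; rewrite leq_add2r; exact: bigmin_le.
split; [exact: lower_clique | exact: upper].
Qed.
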